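(* Let $\alpha_1,\alpha_2,\beta_2,\beta_3,\beta_4,\delta_1,\delta_2,\delta_4$ be positive real constants, let $i_M>0$, and let $i\in C(\mathbb{R}_+,[0,i_M])$, where $\mathbb{R}_+=[0,\infty)$. Consider the system $$u_1'=u_1(1-u_1-\alpha_1u_2-\delta_1u_3),\qquad u_2'=\beta_2u_2(1-u_2-\alpha_2u_1-\delta_2u_4),$$ $$u_3'=\beta_3(u_2-u_3),\qquad u_4'=\beta_4\big(i(t)-u_4-\delta_4u_4u_2\big).$$ If $\mathbf{u}(0)=(u_1(0),u_2(0),u_3(0),u_4(0))\in\mathbb{R}_+^4$, then this system has a unique solution $\mathbf{u}$ defined for all $t\in\mathbb{R}_+$, and it satisfies $\mathbf{u}(t)\in\mathbb{R}_+^4$ for all $t\in\mathbb{R}_+$.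
   Context: This is a non-dimensionalised model of normal cell density $u_1$, tumour cell density $u_2$, excess acid concentration $u_3$ and chemotherapy drug concentration $u_4$, with drug infusion rate $i(t)$; $'$ denotes $d/dt$. *)

(* Defs.v *)
From Stdlib Require Import Reals.
From Coquelicot Require Import Coquelicot.
Open Scope R_scope.

Definition Rplus_set (t : R) : Prop := 0 <= t.

Definition cont_on_Rplus (f : R -> R) : Prop :=
  forall t, 0 <= t -> filterlim f (within Rplus_set (locally t)) (locally (f t)).

Definition admissible_infusion (iM : R) (i : R -> R) : Prop :=
  cont_on_Rplus i /\ forall t, 0 <= t -> 0 <= i t <= iM.

(* (u1,u2,u3,u4) is a (classical, C^1 on R_+) solution of the system on R_+
   with initial datum (a1,a2,a3,a4): each component is continuous on R_+,
   differentiable on (0,+oo) with the prescribed derivative (the one-sided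
   derivative at 0 then follows from continuity of the right-hand side). *)
Definition is_solution
    (al1 al2 be2 be3 be4 de1 de2 de4 : R) (i : R -> R)
    (a1 a2 a3 a4 : R) (u1 u2 u3 u4 : R -> R) : Prop :=
  u1 0 = a1 /\ u2 0 = a2 /\ u3 0 = a3 /\ u4 0 = a4 /\
  cont_on_Rplus u1 /\ cont_on_Rplus u2 /\ cont_on_Rplus u3 /\ cont_on_Rplus u4 /\
  forall t, 0 < t ->
    is_derive u1 t (u1 t * (1 - u1 t - al1 * u2 t - de1 * u3 t)) /\
    is_derive u2 t (be2 * u2 t * (1 - u2 t - al2 * u1 t - de2 * u4 t)) /\
    is_derive u3 t (be3 * (u2 t - u3 t)) /\
    is_derive u4 t (be4 * (i t - u4 t - de4 * u4 t * u2 t)).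

(* Main.v *)
Require Import Defs.
From Stdlib Require Import Reals Lra Psatz.
From Coquelicot Require Import Coquelicot.
Open Scope R_scope.

Lemma ball_R (x y e : R) : ball x e y <-> Rabs (y - x) < e.
Proof. reflexivity. Qed.

Lemma lip_cont (f : R -> R) (B : R) :
  0 <= B -> (forall x y, Rabs (f x - f y) <= B * Rabs (x - y)) ->
  forall z, continuous f z.
Proof.
  intros HB Hf z. apply filterlim_locally. intros eps.
  assert (He : 0 < eps / (B + 1)) by (apply Rdiv_lt_0_compat; [apply cond_pos|lra]).
  exists (mkposreal _ He). intros y Hy. rewrite ball_R in Hy |- *. simpl in Hy.
  apply Rle_lt_trans with (B * Rabs (y - z)). apply Hf.
  pose proof (cond_pos eps).
  assert (Rabs (y - z) * (B+1) < eps).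
  { apply Rmult_lt_reg_r with (/ (B+1)). apply Rinv_0_lt_compat; lra.
    rewrite Rmult_assoc, Rinv_r by lra. lra. }
  pose proof (Rabs_pos (y - z)). nra.
Qed.

Lemma cont_bound5 (f h0 h1 h2 h3 h4 : R -> R) (z C : R) :
  0 <= C ->
  (forall s, Rabs (f s - f z) <= C * (Rabs (h0 s - h0 z) + Rabs (h1 s - h1 z)
     + Rabs (h2 s - h2 z) + Rabs (h3 s - h3 z) + Rabs (h4 s - h4 z))) ->
  continuous h0 z -> continuous h1 z -> continuous h2 z -> continuous h3 z ->
  continuous h4 z -> continuous f z.
Proof.
  intros HC Hb C0 C1 C2 C3 C4. apply filterlim_locally. intros eps.
  assert (He : 0 < eps / (5 * (C + 1))) by (apply Rdiv_lt_0_compat; [apply cond_pos|lra]).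
  set (e' := mkposreal _ He).
  pose proof (proj1 (filterlim_locally _ _) C0 e') as D0.
  pose proof (proj1 (filterlim_locally _ _) C1 e') as D1.
  pose proof (proj1 (filterlim_locally _ _) C2 e') as D2.
  pose proof (proj1 (filterlim_locally _ _) C3 e') as D3.
  pose proof (proj1 (filterlim_locally _ _) C4 e') as D4.
  generalize (filter_and _ _ D0 (filter_and _ _ D1 (filter_and _ _ D2 (filter_and _ _ D3 D4)))).
  apply filter_imp. intros s (E0 & E1 & E2 & E3 & E4).
  rewrite ball_R in *. simpl in *.
  pose proof (cond_pos eps).
  assert (Hk : eps / (5 * (C + 1)) * (5 * (C+1)) = eps) by (field; lra).
  specialize (Hb s).
  set (S := Rabs (h0 s - h0 z) + Rabs (h1 s - h1 z) + Rabs (h2 s - h2 z)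
     + Rabs (h3 s - h3 z) + Rabs (h4 s - h4 z)) in *.
  assert (S < 5 * (eps / (5 * (C + 1)))) by (unfold S; lra).
  assert (0 <= S) by (unfold S; pose proof (Rabs_pos (h0 s - h0 z)); pose proof (Rabs_pos (h1 s - h1 z));
     pose proof (Rabs_pos (h2 s - h2 z)); pose proof (Rabs_pos (h3 s - h3 z)); pose proof (Rabs_pos (h4 s - h4 z)); lra).
  set (q := eps / (5 * (C + 1))) in *.
  assert (C * S <= C * (5*q)) by nra.
  assert (C * (5 * q) < eps) by nra.
  lra.
Qed.


Lemma Rmax0_lip x y : Rabs (Rmax 0 x - Rmax 0 y) <= Rabs (x - y).
Proof.
  unfold Rmax; destruct (Rle_dec 0 x); destruct (Rle_dec 0 y);
  unfold Rabs; repeat destruct Rcase_abs; lra.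
Qed.

Lemma ext_cont (f : R -> R) : cont_on_Rplus f -> forall x, continuous (fun t => f (Rmax 0 t)) x.
Proof.
  intros Hf x. unfold continuous.
  apply filterlim_comp with (G := within Rplus_set (locally (Rmax 0 x))).
  - intros P [eps HP]. exists eps. intros y Hy. apply HP.
    + rewrite ball_R in Hy |- *. eapply Rle_lt_trans. apply Rmax0_lip. exact Hy.
    + unfold Rplus_set. apply Rmax_l.
  - apply Hf. apply Rmax_l.
Qed.

Lemma cont_within (f : R -> R) : (forall x, continuous f x) -> cont_on_Rplus f.
Proof.
  intros Hf t _. eapply filterlim_filter_le_1. apply filter_le_within. apply Hf.
Qed.

Lemma inv_lemma (f f' : R -> R) (T M : R) :
  (forall x, continuity_pt f x) ->
  (forall x, 0 < x < T -> is_derive f x (f' x)) ->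
  f 0 <= M ->
  (forall x, 0 < x < T -> M < f x -> f' x <= 0) ->
  forall t, 0 <= t <= T -> f t <= M.
Proof.
  intros Hc Hd H0 Hn t Ht.
  destruct (Rle_or_lt (f t) M) as [|Hft]; [assumption|exfalso].
  set (E := fun r => 0 <= r <= t /\ f r <= M).
  assert (HB : bound E) by (exists t; intros r [Hr _]; lra).
  assert (HE : exists r, E r) by (exists 0; split; [lra|exact H0]).
  destruct (completeness E HB HE) as [s [Hub Hlub]].
  assert (Hs0 : 0 <= s) by (apply Hub; split; [lra|exact H0]).
  assert (Hst : s <= t) by (apply Hlub; intros r [Hr _]; lra).
  assert (Hfs : f s <= M).
  { destruct (Rle_or_lt (f s) M) as [|Hfs]; [assumption|exfalso].
    pose proof (Hc s) as Cs. apply continuity_pt_filterlim in Cs.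
    assert (Hp : 0 < f s - M) by lra.
    destruct (proj1 (filterlim_locally _ _) Cs (mkposreal _ Hp)) as [d Hd'].
    assert (Hup : is_upper_bound E (s - d)).
    { intros r [Hr Hfr]. destruct (Rle_or_lt r (s - d)) as [|Hlt]; [assumption|exfalso].
      assert (r <= s) by (apply Hub; split; assumption).
      assert (Hb : ball s d r).
      { change (Rabs (r - s) < d). rewrite Rabs_left1 by lra. lra. }
      specialize (Hd' r Hb). change (Rabs (f r - f s) < f s - M) in Hd'.
      apply Rabs_def2 in Hd'. lra. }
    specialize (Hlub _ Hup). pose proof (cond_pos d). lra. }
  assert (Hst' : s < t) by (destruct (Req_dec s t); [subst; lra|lra]).
  assert (Hgt : forall r, s < r <= t -> M < f r).
  { intros r Hr. destruct (Rle_or_lt (f r) M) as [Hfr|]; [exfalso|assumption].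
    assert (r <= s) by (apply Hub; split; [lra|exact Hfr]). lra. }
  assert (pr1 : forall c, s < c < t -> derivable_pt f c).
  { intros c Hcc. exists (f' c). apply is_derive_Reals. apply Hd. lra. }
  assert (pr2 : forall c, s < c < t -> derivable_pt id c).
  { intros c _. apply derivable_pt_id. }
  destruct (MVT f id s t pr1 pr2 Hst' (fun c _ => Hc c) (fun c _ => derivable_continuous_pt _ _ (derivable_pt_id c)))
    as [c [P HM]].
  rewrite (derive_pt_eq_0 f c (f' c) (pr1 c P)) in HM
    by (apply is_derive_Reals; apply Hd; lra).
  rewrite (derive_pt_eq_0 id c 1 (pr2 c P)) in HM
    by (apply derivable_pt_lim_id).
  unfold id in HM.
  assert (f' c <= 0) by (apply Hn; [lra| apply Hgt; lra]).
  assert ((t - s) * f' c <= 0) by nra.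
  lra.
Qed.

Definition Cont (g : R -> R) := forall z, continuous g z.

Lemma exRI (g : R -> R) u v : Cont g -> ex_RInt g u v.
Proof. intros Hg. apply (@ex_RInt_continuous R_CompleteNormedModule). intros; apply Hg. Qed.

Lemma RInt_diff0 (g : R -> R) x y : Cont g -> RInt g 0 x - RInt g 0 y = RInt g y x.
Proof.
  intros Hg. rewrite <- (RInt_Chasles g 0 y x) by (apply exRI; auto).
  change (plus (RInt g 0 y) (RInt g y x)) with (RInt g 0 y + RInt g y x). ring.
Qed.

Lemma RInt_bound (g : R -> R) B x y : Cont g -> (forall t, Rabs (g t) <= B) ->
  Rabs (RInt g y x) <= B * Rabs (x - y).
Proof.
  intros Hg HB. destruct (Rle_or_lt y x) as [Hyx|Hxy].
  - rewrite (Rabs_right (x - y)) by lra. rewrite Rmult_comm. apply abs_RInt_le_const.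
    exact Hyx. apply exRI; exact Hg. intros; apply HB.
  - rewrite <- (opp_RInt_swap g x y) by (apply exRI; exact Hg).
    change (Rabs (- RInt g x y) <= B * Rabs (x - y)). rewrite Rabs_Ropp.
    rewrite (Rabs_left (x - y)) by lra. replace (- (x - y)) with (y - x) by ring. rewrite Rmult_comm.
    apply abs_RInt_le_const. lra. apply exRI; exact Hg. intros; apply HB.
Qed.

Lemma RInt_le_abs (f g : R -> R) s : 0 <= s -> Cont f -> Cont g ->
  (forall r, 0 <= r <= s -> Rabs (f r) <= g r) -> Rabs (RInt f 0 s) <= RInt g 0 s.
Proof.
  intros Hs Hf Hg H.
  assert (H1 : RInt (fun x => - g x) 0 s <= RInt f 0 s).
  { apply (RInt_le (fun x => - g x) f 0 s Hs).
    + apply (ex_RInt_opp g). apply exRI; exact Hg.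
    + apply exRI; exact Hf.
    + intros x Hx. specialize (H x ltac:(lra)). apply Rabs_le_between in H. lra. }
  assert (H2 : RInt (fun x => - g x) 0 s = - RInt g 0 s).
  { apply (RInt_opp g 0 s). apply exRI; exact Hg. }
  assert (H3 : RInt f 0 s <= RInt g 0 s).
  { apply (RInt_le f g 0 s Hs). apply exRI; exact Hf. apply exRI; exact Hg.
    intros x Hx. specialize (H x ltac:(lra)). apply Rabs_le_between in H. lra. }
  rewrite H2 in H1. set (a := RInt f 0 s) in *. set (b := RInt g 0 s) in *.
  apply Rabs_le. lra.
Qed.

Lemma RInt_sub (f g : R -> R) a b : Cont f -> Cont g ->
  RInt (fun x => f x - g x) a b = RInt f a b - RInt g a b.
Proof. intros Hf Hg. apply (RInt_minus f g); apply exRI; assumption. Qed.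

Lemma RInt_cexp (A c s : R) : 0 < c ->
  RInt (fun r => A * exp (c * r)) 0 s = A * (exp (c * s) - 1) / c.
Proof.
  intros Hc. apply is_RInt_unique.
  replace (A * (exp (c * s) - 1) / c) with (minus (A * exp (c * s) / c) (A * exp (c * 0) / c)).
  2:{ rewrite Rmult_0_r, exp_0. unfold minus, plus, opp; simpl. field. lra. }
  apply (is_RInt_derive (fun r => A * exp (c * r) / c)).
  - intros x _. auto_derive; [auto|]. field. lra.
  - intros x _. apply (ex_derive_continuous (V := R_NormedModule)). auto_derive. auto.
Qed.

Lemma geom_zero (x C : R) : (forall n, Rabs x <= C * (/2) ^ n) -> x = 0.
Proof.
  intros H.
  assert (Hq : Rabs (/2) < 1) by (rewrite Rabs_right; lra).
  pose proof (is_lim_seq_scal_l _ C 0 (is_lim_seq_geom (/2) Hq)) as L.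
  simpl in L. rewrite Rmult_0_r in L.
  pose proof (is_lim_seq_le (fun _ => Rabs x) _ (Rabs x) 0 H (is_lim_seq_const _) L) as Hle.
  simpl in Hle. pose proof (Rabs_pos x).
  destruct (Req_dec x 0) as [E|E]; [exact E|]. pose proof (Rabs_pos_lt x E). lra.
Qed.

Lemma lim_abs_le (u : nat -> R) (l a C : R) : is_lim_seq u l -> (forall m, Rabs (u m - a) <= C) -> Rabs (l - a) <= C.
Proof.
  intros Hu H.
  assert (L : is_lim_seq (fun m => Rabs (u m - a)) (Rabs (l - a))).
  { apply (is_lim_seq_abs _ (Finite (l - a))). exact (is_lim_seq_minus' u (fun _ => a) l a Hu (is_lim_seq_const a)). }
  pose proof (is_lim_seq_le _ (fun _ => C) _ C H L (is_lim_seq_const _)). simpl in H0. auto.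
Qed.

Lemma prod_lip a b a' b' K : Rabs a <= K -> Rabs b' <= K ->
  Rabs (a * b - a' * b') <= K * (Rabs (a - a') + Rabs (b - b')).
Proof.
  intros Ha Hb.
  replace (a * b - a' * b') with (a * (b - b') + b' * (a - a')) by ring.
  eapply Rle_trans. apply Rabs_triang. rewrite !Rabs_mult.
  pose proof (Rabs_pos (b - b')). pose proof (Rabs_pos (a - a')).
  pose proof (Rabs_pos a). pose proof (Rabs_pos b'). nra.
Qed.

Section Model.
Variables al1 al2 be2 be3 be4 de1 de2 de4 : R.
Hypothesis Hal1 : 0 < al1. Hypothesis Hal2 : 0 < al2.
Hypothesis Hbe2 : 0 < be2. Hypothesis Hbe3 : 0 < be3. Hypothesis Hbe4 : 0 < be4.
Hypothesis Hde1 : 0 < de1. Hypothesis Hde2 : 0 < de2. Hypothesis Hde4 : 0 < de4.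

Definition Gv (j : nat) (e : R) (x : nat -> R) : R :=
  match j with
  | 0 => x 0%nat * (1 - x 0%nat - al1 * x 1%nat - de1 * x 2%nat)
  | 1 => be2 * x 1%nat * (1 - x 1%nat - al2 * x 0%nat - de2 * x 3%nat)
  | 2 => be3 * (x 1%nat - x 2%nat)
  | 3 => be4 * (e - x 3%nat - de4 * x 3%nat * x 1%nat)
  | _ => 0
  end.

Definition Sdist (x y : nat -> R) : R :=
  Rabs (x 0%nat - y 0%nat) + Rabs (x 1%nat - y 1%nat)
  + Rabs (x 2%nat - y 2%nat) + Rabs (x 3%nat - y 3%nat).

Definition Pc := 1 + al1 + al2 + be2 + be3 + be4 + de1 + de2 + de4.
Definition LK (K : R) := 4 * Pc * Pc * (1 + K).

Lemma LK_pos K : 0 <= K -> 0 < LK K.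
Proof. intros. unfold LK, Pc. assert (0 < 1 + al1 + al2 + be2 + be3 + be4 + de1 + de2 + de4) by lra.
  apply Rmult_lt_0_compat; [|lra]. apply Rmult_lt_0_compat; [|lra]. lra. Qed.

Lemma G_lip K j e x y : 0 <= K ->
  (forall k, (k < 4)%nat -> Rabs (x k) <= K /\ Rabs (y k) <= K) ->
  Rabs (Gv j e x - Gv j e y) <= LK K * Sdist x y.
Proof.
  intros HK Hb.
  destruct (Hb 0%nat ltac:(lia)) as [X0 Y0].
  destruct (Hb 1%nat ltac:(lia)) as [X1 Y1].
  destruct (Hb 2%nat ltac:(lia)) as [X2 Y2].
  destruct (Hb 3%nat ltac:(lia)) as [X3 Y3].
  unfold Sdist.
  set (d0 := Rabs (x 0%nat - y 0%nat)). set (d1 := Rabs (x 1%nat - y 1%nat)).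
  set (d2 := Rabs (x 2%nat - y 2%nat)). set (d3 := Rabs (x 3%nat - y 3%nat)).
  assert (0 <= d0) by apply Rabs_pos. assert (0 <= d1) by apply Rabs_pos.
  assert (0 <= d2) by apply Rabs_pos. assert (0 <= d3) by apply Rabs_pos.
  set (S := d0 + d1 + d2 + d3).
  assert (HP : 1 <= Pc) by (unfold Pc; lra).
  assert (HL : forall c, 0 <= c -> c <= LK K -> forall v, Rabs v <= c * S -> Rabs v <= LK K * S).
  { intros c Hc HcL v Hv. eapply Rle_trans. apply Hv. apply Rmult_le_compat_r. unfold S; lra. exact HcL. }
  unfold LK in HL.
  destruct j as [|[|[|[|j]]]]; simpl.
  - pose proof (prod_lip (x 0%nat) (x 0%nat) (y 0%nat) (y 0%nat) K X0 Y0) as P1.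
    pose proof (prod_lip (x 0%nat) (x 1%nat) (y 0%nat) (y 1%nat) K X0 Y1) as P2.
    pose proof (prod_lip (x 0%nat) (x 2%nat) (y 0%nat) (y 2%nat) K X0 Y2) as P3.
    fold d0 d1 d2 in P1, P2, P3.
    apply (HL (1 + 2 * K + al1 * 2 * K + de1 * 2 * K)).
    + nra.
    + assert (1 + al1 + de1 <= Pc) by (unfold Pc; lra).
      assert (0 <= (1 + K) * (Pc - (1 + al1 + de1))) by (apply Rmult_le_pos; lra).
      assert (1 + 2 * K + al1 * 2 * K + de1 * 2 * K <= 2 * (1 + K) * Pc) by nra.
      assert (Pc <= Pc * Pc) by nra. nra.
    + replace (x 0%nat * (1 - x 0%nat - al1 * x 1%nat - de1 * x 2%nat) -
               y 0%nat * (1 - y 0%nat - al1 * y 1%nat - de1 * y 2%nat))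
        with ((x 0%nat - y 0%nat) - (x 0%nat * x 0%nat - y 0%nat * y 0%nat)
              - al1 * (x 0%nat * x 1%nat - y 0%nat * y 1%nat)
              - de1 * (x 0%nat * x 2%nat - y 0%nat * y 2%nat)) by ring.
      set (q1 := x 0%nat * x 0%nat - y 0%nat * y 0%nat) in *.
      set (q2 := x 0%nat * x 1%nat - y 0%nat * y 1%nat) in *.
      set (q3 := x 0%nat * x 2%nat - y 0%nat * y 2%nat) in *.
      eapply Rle_trans. apply Rabs_triang. rewrite Rabs_Ropp, Rabs_mult, (Rabs_right de1) by lra.
      eapply Rle_trans. apply Rplus_le_compat_r. apply Rabs_triang.
      rewrite Rabs_Ropp, Rabs_mult, (Rabs_right al1) by lra.
      eapply Rle_trans. apply Rplus_le_compat_r. apply Rplus_le_compat_r. apply Rabs_triang.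
      rewrite Rabs_Ropp. fold d0.
      assert (K * (d0 + d1) <= K * S) by (apply Rmult_le_compat_l; unfold S; lra).
      assert (K * (d0 + d2) <= K * S) by (apply Rmult_le_compat_l; unfold S; lra).
      assert (al1 * Rabs q2 <= al1 * (K * S)) by (apply Rmult_le_compat_l; lra).
      assert (de1 * Rabs q3 <= de1 * (K * S)) by (apply Rmult_le_compat_l; lra).
      assert (d0 <= S) by (unfold S; lra).
      assert (K * d0 <= K * S) by (apply Rmult_le_compat_l; lra).
      assert (0 <= al1 * (K * S)) by (apply Rmult_le_pos; [lra|apply Rmult_le_pos; unfold S; lra]). assert (0 <= de1 * (K * S)) by (apply Rmult_le_pos; [lra|apply Rmult_le_pos; unfold S; lra]). nra.
  - pose proof (prod_lip (x 1%nat) (x 1%nat) (y 1%nat) (y 1%nat) K X1 Y1) as P1.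
    pose proof (prod_lip (x 1%nat) (x 0%nat) (y 1%nat) (y 0%nat) K X1 Y0) as P2.
    pose proof (prod_lip (x 1%nat) (x 3%nat) (y 1%nat) (y 3%nat) K X1 Y3) as P3.
    fold d0 d1 d3 in P1, P2, P3.
    apply (HL (be2 * (1 + 2 * K + al2 * 2 * K + de2 * 2 * K))).
    + apply Rmult_le_pos; nra.
    + assert (1 + al2 + de2 <= Pc) by (unfold Pc; lra).
      assert (0 <= (1 + K) * (Pc - (1 + al2 + de2))) by (apply Rmult_le_pos; lra).
      assert (1 + 2 * K + al2 * 2 * K + de2 * 2 * K <= 2 * (1 + K) * Pc) by nra.
      assert (be2 <= Pc) by (unfold Pc; lra).
      assert (be2 * (1 + 2 * K + al2 * 2 * K + de2 * 2 * K) <= Pc * (2 * (1 + K) * Pc)).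
      { apply Rmult_le_compat; nra. }
      nra.
    + replace (be2 * x 1%nat * (1 - x 1%nat - al2 * x 0%nat - de2 * x 3%nat) -
               be2 * y 1%nat * (1 - y 1%nat - al2 * y 0%nat - de2 * y 3%nat))
        with (be2 * ((x 1%nat - y 1%nat) - (x 1%nat * x 1%nat - y 1%nat * y 1%nat)
              - al2 * (x 1%nat * x 0%nat - y 1%nat * y 0%nat)
              - de2 * (x 1%nat * x 3%nat - y 1%nat * y 3%nat))) by ring.
      rewrite Rabs_mult, (Rabs_right be2) by lra. rewrite Rmult_assoc.
      apply Rmult_le_compat_l; [lra|].
      set (q1 := x 1%nat * x 1%nat - y 1%nat * y 1%nat) in *.
      set (q2 := x 1%nat * x 0%nat - y 1%nat * y 0%nat) in *.
      set (q3 := x 1%nat * x 3%nat - y 1%nat * y 3%nat) in *.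
      eapply Rle_trans. apply Rabs_triang. rewrite Rabs_Ropp, Rabs_mult, (Rabs_right de2) by lra.
      eapply Rle_trans. apply Rplus_le_compat_r. apply Rabs_triang.
      rewrite Rabs_Ropp, Rabs_mult, (Rabs_right al2) by lra.
      eapply Rle_trans. apply Rplus_le_compat_r. apply Rplus_le_compat_r. apply Rabs_triang.
      rewrite Rabs_Ropp. fold d1.
      assert (K * (d1 + d0) <= K * S) by (apply Rmult_le_compat_l; unfold S; lra).
      assert (K * (d1 + d3) <= K * S) by (apply Rmult_le_compat_l; unfold S; lra).
      assert (al2 * Rabs q2 <= al2 * (K * S)) by (apply Rmult_le_compat_l; lra).
      assert (de2 * Rabs q3 <= de2 * (K * S)) by (apply Rmult_le_compat_l; lra).
      assert (d1 <= S) by (unfold S; lra).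
      assert (K * d1 <= K * S) by (apply Rmult_le_compat_l; lra).
      assert (0 <= al2 * (K * S)) by (apply Rmult_le_pos; [lra|apply Rmult_le_pos; unfold S; lra]).
      assert (0 <= de2 * (K * S)) by (apply Rmult_le_pos; [lra|apply Rmult_le_pos; unfold S; lra]).
      nra.
  - apply (HL be3).
    + lra.
    + assert (be3 <= Pc) by (unfold Pc; lra). assert (Pc <= Pc * Pc) by nra.
      assert (Pc * Pc <= 4 * Pc * Pc * (1 + K)) by nra. lra.
    + replace (be3 * (x 1%nat - x 2%nat) - be3 * (y 1%nat - y 2%nat))
        with (be3 * ((x 1%nat - y 1%nat) - (x 2%nat - y 2%nat))) by ring.
      rewrite Rabs_mult, (Rabs_right be3) by lra.
      apply Rmult_le_compat_l; [lra|].
      eapply Rle_trans. apply Rabs_triang. rewrite Rabs_Ropp. fold d1 d2. unfold S; lra.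
  - pose proof (prod_lip (x 3%nat) (x 1%nat) (y 3%nat) (y 1%nat) K X3 Y1) as P3.
    fold d1 d3 in P3.
    apply (HL (be4 * (1 + de4 * K))).
    + apply Rmult_le_pos; nra.
    + assert (be4 <= Pc) by (unfold Pc; lra). assert (de4 <= Pc) by (unfold Pc; lra).
      assert (1 + de4 * K <= Pc * (1 + K)) by nra.
      assert (be4 * (1 + de4 * K) <= Pc * (Pc * (1 + K))) by (apply Rmult_le_compat; nra).
      nra.
    + replace (be4 * (e - x 3%nat - de4 * x 3%nat * x 1%nat) - be4 * (e - y 3%nat - de4 * y 3%nat * y 1%nat))
        with (be4 * (- (x 3%nat - y 3%nat) - de4 * (x 3%nat * x 1%nat - y 3%nat * y 1%nat))) by ring.
      rewrite Rabs_mult, (Rabs_right be4) by lra. rewrite Rmult_assoc.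
      apply Rmult_le_compat_l; [lra|].
      set (q3 := x 3%nat * x 1%nat - y 3%nat * y 1%nat) in *.
      eapply Rle_trans. apply Rabs_triang. rewrite !Rabs_Ropp, Rabs_mult, (Rabs_right de4) by lra.
      fold d3.
      assert (K * (d3 + d1) <= K * S) by (apply Rmult_le_compat_l; unfold S; lra).
      assert (de4 * Rabs q3 <= de4 * (K * S)) by (apply Rmult_le_compat_l; lra).
      assert (d3 <= S) by (unfold S; lra).
      nra.
  - rewrite Rminus_0_r, Rabs_R0. apply Rmult_le_pos. left; apply LK_pos; lra. unfold S; lra.
Qed.


Definition clip (M x : R) := Rmax 0 (Rmin M x).

Lemma clip_bnd M x : 0 <= M -> 0 <= clip M x <= M.
Proof. intros. unfold clip, Rmax, Rmin. repeat destruct Rle_dec; lra. Qed.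
Lemma clip_lip M x y : 0 <= M -> Rabs (clip M x - clip M y) <= Rabs (x - y).
Proof. intros. unfold clip, Rmax, Rmin. repeat destruct Rle_dec; unfold Rabs; repeat destruct Rcase_abs; lra. Qed.
Lemma clip_id M x : 0 <= x <= M -> clip M x = x.
Proof. intros. unfold clip, Rmax, Rmin. repeat destruct Rle_dec; lra. Qed.
Lemma clip_hi M x : 0 <= M -> M <= x -> clip M x = M.
Proof. intros. unfold clip, Rmax, Rmin. repeat destruct Rle_dec; lra. Qed.
Lemma clip_lo M x : 0 <= M -> x <= 0 -> clip M x = 0.
Proof. intros. unfold clip, Rmax, Rmin. repeat destruct Rle_dec; lra. Qed.

Variables (iM : R) (i : R -> R) (a1 a2 a3 a4 : R).
Hypothesis HiM : 0 < iM.
Hypothesis Hi : admissible_infusion iM i.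
Hypothesis Ha1 : 0 <= a1. Hypothesis Ha2 : 0 <= a2.
Hypothesis Ha3 : 0 <= a3. Hypothesis Ha4 : 0 <= a4.

Definition Mv (k : nat) : R :=
  match k with
  | 0 => Rmax 1 a1
  | 1 => Rmax 1 a2
  | 2 => Rmax (Rmax 1 a2) a3
  | _ => Rmax iM a4
  end.

Definition av (k : nat) : R :=
  match k with 0 => a1 | 1 => a2 | 2 => a3 | _ => a4 end.

Lemma Mv_ge k : 0 <= Mv k /\ av k <= Mv k.
Proof.
  destruct k as [|[|[|k]]]; simpl; split;
  repeat (apply Rmax_Rle; try (left; lra); try (right; lra)); try (unfold Rmax; repeat destruct Rle_dec; lra).
Qed.

Definition Kx := Mv 0 + Mv 1 + Mv 2 + Mv 3.

Lemma Kx_ge k : (k < 4)%nat -> Mv k <= Kx.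
Proof.
  intros Hk. pose proof (Mv_ge 0) as [A _]. pose proof (Mv_ge 1) as [B _].
  pose proof (Mv_ge 2) as [C _]. pose proof (Mv_ge 3) as [D _].
  unfold Kx. destruct k as [|[|[|[|k]]]]; try lra. lia.
Qed.
Lemma Kx_pos : 0 <= Kx.
Proof. pose proof (Kx_ge 0 ltac:(lia)). pose proof (Mv_ge 0). lra. Qed.

Definition ie (t : R) := i (Rmax 0 t).
Lemma ie_cont : Cont ie.
Proof. intros z. apply (ext_cont i). apply Hi. Qed.
Lemma ie_bnd t : 0 <= ie t <= iM.
Proof. apply Hi. apply Rmax_l. Qed.

Definition cv (x : nat -> R) : nat -> R := fun k => clip (Mv k) (x k).
Definition Fv (j : nat) (s : R) (x : nat -> R) : R := Gv j (ie s) (cv x).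
Definition Lc := LK Kx.
Definition Bd := be4 * iM + Lc * (4 * Kx).

Lemma Lc_pos : 0 < Lc.
Proof. apply LK_pos. apply Kx_pos. Qed.

Lemma cv_bnd x k : (k < 4)%nat -> Rabs (cv x k) <= Kx.
Proof.
  intros Hk. unfold cv. pose proof (Mv_ge k) as [A _]. pose proof (clip_bnd (Mv k) (x k) A).
  pose proof (Kx_ge k Hk). rewrite Rabs_right by lra. lra.
Qed.

Lemma Sdist_cv x y : Sdist (cv x) (cv y) <= Sdist x y.
Proof.
  unfold Sdist, cv.
  pose proof (clip_lip (Mv 0) (x 0%nat) (y 0%nat) (proj1 (Mv_ge 0))).
  pose proof (clip_lip (Mv 1) (x 1%nat) (y 1%nat) (proj1 (Mv_ge 1))).
  pose proof (clip_lip (Mv 2) (x 2%nat) (y 2%nat) (proj1 (Mv_ge 2))).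
  pose proof (clip_lip (Mv 3) (x 3%nat) (y 3%nat) (proj1 (Mv_ge 3))). lra.
Qed.

Lemma Sdist_pos x y : 0 <= Sdist x y.
Proof.
  unfold Sdist. pose proof (Rabs_pos (x 0%nat - y 0%nat)). pose proof (Rabs_pos (x 1%nat - y 1%nat)).
  pose proof (Rabs_pos (x 2%nat - y 2%nat)). pose proof (Rabs_pos (x 3%nat - y 3%nat)). lra.
Qed.

Lemma F_lip j s x y : Rabs (Fv j s x - Fv j s y) <= Lc * Sdist x y.
Proof.
  unfold Fv. eapply Rle_trans. apply G_lip. apply Kx_pos.
  intros k Hk. split; apply cv_bnd; exact Hk.
  apply Rmult_le_compat_l. left; apply Lc_pos. apply Sdist_cv.
Qed.

Lemma F_bnd j s x : Rabs (Fv j s x) <= Bd.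
Proof.
  pose proof (G_lip Kx j (ie s) (cv x) (fun _ => 0) Kx_pos) as H.
  assert (Hb : forall k, (k < 4)%nat -> Rabs (cv x k) <= Kx /\ Rabs ((fun _ : nat => 0) k) <= Kx).
  { intros k Hk. split. apply cv_bnd; exact Hk. rewrite Rabs_R0. apply Kx_pos. }
  specialize (H Hb).
  assert (HS : Sdist (cv x) (fun _ => 0) <= 4 * Kx).
  { unfold Sdist. rewrite !Rminus_0_r.
    pose proof (cv_bnd x 0 ltac:(lia)). pose proof (cv_bnd x 1 ltac:(lia)).
    pose proof (cv_bnd x 2 ltac:(lia)). pose proof (cv_bnd x 3 ltac:(lia)). lra. }
  assert (H0 : Rabs (Gv j (ie s) (fun _ => 0)) <= be4 * iM).
  { pose proof (ie_bnd s). destruct j as [|[|[|[|j]]]]; simpl;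
    try (match goal with |- Rabs ?e <= _ => replace e with 0 by ring end; rewrite Rabs_R0; apply Rmult_le_pos; lra).
    replace (be4 * (ie s - 0 - de4 * 0 * 0)) with (be4 * ie s) by ring.
    rewrite Rabs_mult, !Rabs_right by lra. apply Rmult_le_compat_l; lra. }
  unfold Fv, Bd.
  assert (Lc * Sdist (cv x) (fun _ => 0) <= Lc * (4 * Kx)).
  { apply Rmult_le_compat_l. left; apply Lc_pos. exact HS. }
  unfold Lc in *.
  pose proof (Rabs_triang_inv (Gv j (ie s) (cv x)) (Gv j (ie s) (fun _ => 0))). lra.
Qed.

Lemma F_time j s s' x : Rabs (Fv j s x - Fv j s' x) <= be4 * Rabs (ie s - ie s').
Proof.
  unfold Fv. destruct j as [|[|[|[|j]]]]; simpl;
  try (rewrite Rminus_diag, Rabs_R0; apply Rmult_le_pos; [lra|apply Rabs_pos]).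
  replace (be4 * (ie s - cv x 3%nat - de4 * cv x 3%nat * cv x 1%nat) -
           be4 * (ie s' - cv x 3%nat - de4 * cv x 3%nat * cv x 1%nat))
    with (be4 * (ie s - ie s')) by ring.
  rewrite Rabs_mult, (Rabs_right be4) by lra. lra.
Qed.

Lemma F_cont j (p : nat -> R -> R) : (forall k, (k < 4)%nat -> Cont (p k)) -> Cont (fun s => Fv j s (fun k => p k s)).
Proof.
  intros Hp z.
  apply (cont_bound5 _ (p 0%nat) (p 1%nat) (p 2%nat) (p 3%nat) ie z (Lc + be4)).
  - pose proof Lc_pos. lra.
  - intros s.
    pose proof (F_time j s z (fun k => p k s)).
    pose proof (F_lip j z (fun k => p k s) (fun k => p k z)).
    unfold Sdist in H0. simpl in H0.
    pose proof (Rabs_triang (Fv j s (fun k => p k s) - Fv j z (fun k => p k s))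
                            (Fv j z (fun k => p k s) - Fv j z (fun k => p k z))).
    replace (Fv j s (fun k => p k s) - Fv j z (fun k => p k s) +
             (Fv j z (fun k => p k s) - Fv j z (fun k => p k z)))
      with (Fv j s (fun k => p k s) - Fv j z (fun k => p k z)) in H1 by ring.
    set (S4 := Rabs (p 0%nat s - p 0%nat z) + Rabs (p 1%nat s - p 1%nat z) + Rabs (p 2%nat s - p 2%nat z)
         + Rabs (p 3%nat s - p 3%nat z)) in *.
    set (e := Rabs (ie s - ie z)) in *.
    assert (0 <= S4) by (unfold S4; pose proof (Rabs_pos (p 0%nat s - p 0%nat z)); pose proof (Rabs_pos (p 1%nat s - p 1%nat z)); pose proof (Rabs_pos (p 2%nat s - p 2%nat z)); pose proof (Rabs_pos (p 3%nat s - p 3%nat z)); lra).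
    assert (0 <= e) by apply Rabs_pos.
    pose proof Lc_pos. nra.
  - apply Hp; lia. - apply Hp; lia. - apply Hp; lia. - apply Hp; lia. - apply ie_cont.
Qed.


Lemma exp_mono x y : x <= y -> exp x <= exp y.
Proof. intros H. destruct (Req_dec x y) as [E|E]; [subst; lra|left; apply exp_increasing; lra]. Qed.

Lemma Bd_pos : 0 <= Bd.
Proof. unfold Bd. pose proof Lc_pos. pose proof Kx_pos. nra. Qed.

Fixpoint pic (n : nat) : nat -> R -> R :=
  match n with
  | O => fun j _ => av j
  | S m => fun j t => av j + RInt (fun s => Fv j s (fun k => pic m k s)) 0 t
  end.

Lemma pic_lip n : forall j x y, Rabs (pic n j x - pic n j y) <= Bd * Rabs (x - y).
Proof.
  induction n as [|n IH]; intros j x y; simpl.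
  - rewrite Rminus_diag, Rabs_R0. apply Rmult_le_pos. apply Bd_pos. apply Rabs_pos.
  - set (g := fun s => Fv j s (fun k => pic n k s)).
    assert (Cg : Cont g).
    { apply F_cont. intros k _. intro z; apply (lip_cont _ Bd Bd_pos (IH k)). }
    replace (av j + RInt g 0 x - (av j + RInt g 0 y)) with (RInt g 0 x - RInt g 0 y) by ring.
    rewrite (RInt_diff0 g x y Cg). apply RInt_bound. exact Cg. intros; apply F_bnd.
Qed.

Lemma pic_cont n j : Cont (pic n j).
Proof. intro z; apply (lip_cont _ Bd Bd_pos (pic_lip n j)). Qed.

Lemma g_cont n j : Cont (fun s => Fv j s (fun k => pic n k s)).
Proof. apply F_cont. intros k _. apply pic_cont. Qed.

Definition cc := 8 * Lc.
Definition K0 := 4 * Bd / cc.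

Lemma cc_pos : 0 < cc.
Proof. unfold cc. pose proof Lc_pos. lra. Qed.
Lemma K0_pos : 0 <= K0.
Proof. unfold K0. pose proof cc_pos. pose proof Bd_pos. apply Rmult_le_pos. lra. left; apply Rinv_0_lt_compat; lra. Qed.

Lemma Sdist_le x y b : (forall k, (k < 4)%nat -> Rabs (x k - y k) <= b) -> Sdist x y <= 4 * b.
Proof.
  intros H. unfold Sdist.
  pose proof (H 0%nat ltac:(lia)). pose proof (H 1%nat ltac:(lia)).
  pose proof (H 2%nat ltac:(lia)). pose proof (H 3%nat ltac:(lia)). lra.
Qed.

Lemma Sdist_ge x y k : (k < 4)%nat -> Rabs (x k - y k) <= Sdist x y.
Proof.
  intros Hk. unfold Sdist.
  pose proof (Rabs_pos (x 0%nat - y 0%nat)). pose proof (Rabs_pos (x 1%nat - y 1%nat)).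
  pose proof (Rabs_pos (x 2%nat - y 2%nat)). pose proof (Rabs_pos (x 3%nat - y 3%nat)).
  destruct k as [|[|[|[|k]]]]; try lra. lia.
Qed.

Lemma cexp_cont A : Cont (fun r => A * exp (cc * r)).
Proof. intros x. apply (ex_derive_continuous (V := R_NormedModule)). auto_derive. auto. Qed.

Lemma pic_step n s : 0 <= s ->
  Sdist (fun k => pic (S n) k s) (fun k => pic n k s) <= K0 * exp (cc * s) * (/2) ^ n.
Proof.
  revert s. induction n as [|n IH]; intros s Hs.
  - simpl pow. rewrite Rmult_1_r.
    eapply Rle_trans. apply (Sdist_le _ _ (Bd * s)).
    + intros k _. simpl.
      assert (E : forall a b : R, a + b - a = b) by (intros; ring). rewrite E.
      replace s with (Rabs (s - 0)) at 2 by (rewrite Rminus_0_r, Rabs_right; lra).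
      apply RInt_bound. apply (g_cont 0 k). intros; apply F_bnd.
    + pose proof (exp_ineq1_le (cc * s)). pose proof cc_pos. pose proof Bd_pos.
      unfold K0.
      replace (4 * Bd / cc * exp (cc * s)) with (4 * Bd * (exp (cc * s) / cc)) by (field; lra).
      rewrite <- Rmult_assoc. apply Rmult_le_compat_l. lra.
      apply Rmult_le_reg_r with cc. lra.
      replace (exp (cc * s) / cc * cc) with (exp (cc * s)) by (field; lra). lra.
  - set (A := Lc * (K0 * (/2) ^ n)).
    eapply Rle_trans. apply (Sdist_le _ _ (A * (exp (cc * s) - 1) / cc)).
    + intros k _.
      set (g1 := fun r => Fv k r (fun k0 => pic (S n) k0 r)).
      set (g0 := fun r => Fv k r (fun k0 => pic n k0 r)).
      change (Rabs ((av k + RInt g1 0 s) - (av k + RInt g0 0 s)) <= A * (exp (cc * s) - 1) / cc).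
      replace ((av k + RInt g1 0 s) - (av k + RInt g0 0 s)) with (RInt g1 0 s - RInt g0 0 s) by ring.
      rewrite <- (RInt_sub g1 g0 0 s (g_cont (S n) k) (g_cont n k)).
      rewrite <- (RInt_cexp A cc s cc_pos).
      apply RInt_le_abs. exact Hs.
      * intros z. apply (cont_bound5 _ g1 g0 g0 g0 g0 z 1). lra.
        intros r. replace (g1 r - g0 r - (g1 z - g0 z)) with ((g1 r - g1 z) + - (g0 r - g0 z)) by ring.
        pose proof (Rabs_triang (g1 r - g1 z) (- (g0 r - g0 z))). rewrite Rabs_Ropp in H.
        pose proof (Rabs_pos (g0 r - g0 z)). lra.
        apply g_cont. apply g_cont. apply g_cont. apply g_cont. apply g_cont.
      * apply cexp_cont.
      * intros r Hr. unfold g1, g0. eapply Rle_trans. apply F_lip.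
        unfold A. replace (Lc * (K0 * (/ 2) ^ n) * exp (cc * r)) with (Lc * (K0 * exp (cc * r) * (/ 2) ^ n)) by ring.
        apply Rmult_le_compat_l. left; apply Lc_pos.
        apply (IH r). lra.
    + pose proof cc_pos. pose proof Lc_pos. pose proof K0_pos.
      pose proof (pow_le (/2) n ltac:(lra)).
      simpl pow. unfold A.
      replace (4 * (Lc * (K0 * (/ 2) ^ n) * (exp (cc * s) - 1) / cc))
        with (K0 * (/ 2) ^ n * (exp (cc * s) - 1) / 2) by (unfold cc; field; lra).
      pose proof (exp_pos (cc * s)).
      assert (0 <= K0 * (/ 2) ^ n) by (apply Rmult_le_pos; lra).
      nra.
Qed.

Lemma pic_cauchy n d s j : 0 <= s -> (j < 4)%nat ->
  Rabs (pic (n + d) j s - pic n j s) <= 2 * K0 * exp (cc * s) * ((/2) ^ n - (/2) ^ (n + d)).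
Proof.
  intros Hs Hj. induction d as [|d IH].
  - rewrite Nat.add_0_r, Rminus_diag, Rabs_R0, Rminus_diag, Rmult_0_r. lra.
  - rewrite Nat.add_succ_r.
    pose proof (Sdist_ge (fun k => pic (S (n + d)) k s) (fun k => pic (n + d) k s) j Hj) as H1.
    pose proof (pic_step (n + d) s Hs) as H2. cbv beta in H1.
    pose proof (Rabs_triang (pic (S (n + d)) j s - pic (n + d) j s) (pic (n + d) j s - pic n j s)) as H3.
    replace (pic (S (n + d)) j s - pic (n + d) j s + (pic (n + d) j s - pic n j s))
      with (pic (S (n + d)) j s - pic n j s) in H3 by ring.
    change ((/2) ^ (S (n + d))) with (/2 * (/2) ^ (n + d)).
    lra.
Qed.

Lemma pic_cauchy' m n s j : 0 <= s -> (j < 4)%nat -> (n <= m)%nat ->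
  Rabs (pic m j s - pic n j s) <= 2 * K0 * exp (cc * s) * (/2) ^ n.
Proof.
  intros Hs Hj Hnm. replace m with (n + (m - n))%nat by lia.
  eapply Rle_trans. apply pic_cauchy; assumption.
  pose proof (pow_le (/2) (n + (m - n)) ltac:(lra)).
  pose proof K0_pos. pose proof (exp_pos (cc * s)).
  assert (0 <= 2 * K0 * exp (cc * s)) by (apply Rmult_le_pos; lra).
  nra.
Qed.

Definition U (j : nat) (t : R) : R := real (Lim_seq (fun n => pic n j (Rmax 0 t))).

Lemma small_geom (C : R) (eps : posreal) : 0 <= C ->
  exists N, forall n, (N <= n)%nat -> C * (/2) ^ n < eps.
Proof.
  intros HC.
  assert (Hq : Rabs (/2) < 1) by (rewrite Rabs_right; lra).
  pose proof (is_lim_seq_geom (/2) Hq) as L. apply is_lim_seq_spec in L.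
  assert (He : 0 < eps / (C + 1)) by (apply Rdiv_lt_0_compat; [apply cond_pos|lra]).
  destruct (L (mkposreal _ He)) as [N HN]. exists N. intros n Hn. specialize (HN n Hn).
  simpl in HN. rewrite Rminus_0_r in HN. rewrite Rabs_right in HN by (apply Rle_ge, pow_le; lra).
  pose proof (pow_le (/2) n ltac:(lra)). pose proof (cond_pos eps).
  assert ((C + 1) * (/ 2) ^ n < eps).
  { apply Rmult_lt_reg_r with (/ (C + 1)). apply Rinv_0_lt_compat; lra.
    replace ((C + 1) * (/ 2) ^ n * / (C + 1)) with ((/2) ^ n) by (field; lra). exact HN. }
  nra.
Qed.

Lemma U_lim j t : (j < 4)%nat -> is_lim_seq (fun n => pic n j (Rmax 0 t)) (U j t).
Proof.
  intros Hj. set (s := Rmax 0 t). assert (Hs : 0 <= s) by apply Rmax_l.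
  assert (Hc : ex_lim_seq_cauchy (fun n => pic n j s)).
  { intros eps.
    assert (HC : 0 <= 2 * K0 * exp (cc * s)).
    { pose proof K0_pos. pose proof (exp_pos (cc * s)). apply Rmult_le_pos; lra. }
    destruct (small_geom _ eps HC) as [N HN]. exists N. intros n m Hn Hm.
    destruct (Nat.le_gt_cases n m) as [Hnm|Hmn].
    - rewrite Rabs_minus_sym. eapply Rle_lt_trans. apply pic_cauchy'; assumption. apply HN; lia.
    - eapply Rle_lt_trans. apply pic_cauchy'; try assumption. lia. apply HN; lia. }
  apply ex_lim_seq_cauchy_corr in Hc. destruct Hc as [l Hl].
  unfold U. fold s. rewrite (is_lim_seq_unique _ _ Hl). exact Hl.
Qed.

Lemma U_bnd j s n : (j < 4)%nat -> 0 <= s ->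
  Rabs (U j s - pic n j s) <= 2 * K0 * exp (cc * s) * (/2) ^ n.
Proof.
  intros Hj Hs. pose proof (U_lim j s Hj) as L. rewrite (Rmax_right 0 s Hs) in L.
  apply (is_lim_seq_incr_n _ n) in L.
  apply (lim_abs_le _ _ _ _ L). intros m. apply pic_cauchy'; try assumption. lia.
Qed.

Lemma U_lip j x y : (j < 4)%nat -> Rabs (U j x - U j y) <= Bd * Rabs (x - y).
Proof.
  intros Hj.
  pose proof (is_lim_seq_minus' _ _ _ _ (U_lim j x Hj) (U_lim j y Hj)) as L.
  replace (U j x - U j y) with (U j x - U j y - 0) by ring.
  apply (lim_abs_le _ _ _ _ L). intros m. rewrite Rminus_0_r.
  eapply Rle_trans. apply pic_lip. apply Rmult_le_compat_l. apply Bd_pos. apply Rmax0_lip.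
Qed.

Lemma U_cont j : (j < 4)%nat -> Cont (U j).
Proof. intros Hj z. apply (lip_cont _ Bd Bd_pos (fun x y => U_lip j x y Hj)). Qed.

Lemma h_cont j : Cont (fun s => Fv j s (fun k => U k s)).
Proof. apply F_cont. intros k Hk. apply U_cont; exact Hk. Qed.

Lemma U_int j t : (j < 4)%nat -> 0 <= t ->
  U j t = av j + RInt (fun s => Fv j s (fun k => U k s)) 0 t.
Proof.
  intros Hj Ht. set (h := fun s => Fv j s (fun k => U k s)).
  set (E := exp (cc * t)).
  assert (HE : 0 < E) by apply exp_pos.
  pose proof K0_pos as HK. pose proof Lc_pos as HL.
  apply Rminus_diag_uniq.
  apply (geom_zero _ (2 * K0 * E + t * (Lc * (4 * (2 * K0 * E))))).
  intros n.
  set (g := fun s => Fv j s (fun k => pic n k s)).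
  assert (Hp : pic (S n) j t = av j + RInt g 0 t) by reflexivity.
  assert (D : U j t - (av j + RInt h 0 t) = (U j t - pic (S n) j t) + (RInt g 0 t - RInt h 0 t)).
  { rewrite Hp. ring. }
  rewrite D. eapply Rle_trans. apply Rabs_triang.
  pose proof (U_bnd j t (S n) Hj Ht) as B1. simpl pow in B1. fold E in B1.
  assert (B2 : Rabs (RInt g 0 t - RInt h 0 t) <= t * (Lc * (4 * (2 * K0 * E * (/2) ^ n)))).
  { rewrite <- (RInt_sub g h 0 t (g_cont n j) (h_cont j)).
    pose proof (RInt_const 0 t (Lc * (4 * (2 * K0 * E * (/2) ^ n)))) as RC.
    change (RInt (fun _ => Lc * (4 * (2 * K0 * E * (/ 2) ^ n))) 0 t =
            (t - 0) * (Lc * (4 * (2 * K0 * E * (/ 2) ^ n)))) in RC.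
    rewrite Rminus_0_r in RC. rewrite <- RC.
    apply RInt_le_abs. exact Ht.
    - intros z. apply (cont_bound5 _ g h h h h z 1). lra.
      intros r. replace (g r - h r - (g z - h z)) with ((g r - g z) + - (h r - h z)) by ring.
      pose proof (Rabs_triang (g r - g z) (- (h r - h z))). rewrite Rabs_Ropp in H.
      pose proof (Rabs_pos (h r - h z)). lra.
      apply g_cont. apply h_cont. apply h_cont. apply h_cont. apply h_cont.
    - intros z. apply continuous_const.
    - intros r Hr. unfold g, h. eapply Rle_trans. apply F_lip.
      apply Rmult_le_compat_l. lra.
      apply Sdist_le. intros k Hk. rewrite Rabs_minus_sym.
      eapply Rle_trans. apply (U_bnd k r n Hk ltac:(lra)).
      pose proof (exp_mono (cc * r) (cc * t) ltac:(pose proof cc_pos; nra)).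
      pose proof (pow_le (/2) n ltac:(lra)).
      assert (0 <= 2 * K0 * (/ 2) ^ n) by (apply Rmult_le_pos; lra).
      fold E in H. nra. }
  pose proof (pow_le (/2) n ltac:(lra)).
  assert (0 <= 2 * K0 * E * (/ 2) ^ n) by (apply Rmult_le_pos; [apply Rmult_le_pos|]; lra).
  assert (2 * K0 * E * (/ 2 * (/ 2) ^ n) <= 2 * K0 * E * (/ 2) ^ n) by nra.
  replace ((2 * K0 * E + t * (Lc * (4 * (2 * K0 * E)))) * (/ 2) ^ n)
    with (2 * K0 * E * (/ 2) ^ n + t * (Lc * (4 * (2 * K0 * E * (/ 2) ^ n)))) by ring.
  lra.
Qed.

Lemma U_der j t : (j < 4)%nat -> 0 < t -> is_derive (U j) t (Fv j t (fun k => U k t)).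
Proof.
  intros Hj Ht. set (h := fun s => Fv j s (fun k => U k s)).
  assert (H2 : is_derive (fun b => RInt h 0 b) t (h t)).
  { apply (is_derive_RInt h (fun b => RInt h 0 b) 0 t).
    - exists (mkposreal 1 Rlt_0_1). intros y _. apply (RInt_correct (V := R_CompleteNormedModule)). apply exRI. apply h_cont.
    - apply h_cont. }
  pose proof (is_derive_plus (K := R_AbsRing) (V := R_NormedModule) (fun _ : R => av j) (fun b => RInt h 0 b) t zero (h t)
     (is_derive_const (av j) t) H2) as D.
  rewrite plus_zero_l in D.
  apply (is_derive_ext_loc (fun b => plus (av j) (RInt h 0 b))); [|exact D].
  exists (mkposreal t Ht). intros y Hy. change (Rabs (y - t) < t) in Hy.
  apply Rabs_def2 in Hy. symmetry. apply U_int. exact Hj. lra.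
Qed.

Lemma box_lemma (f f' : R -> R) (M : R) :
  (forall x, continuity_pt f x) -> (forall x, 0 < x -> is_derive f x (f' x)) ->
  0 <= f 0 <= M ->
  (forall x, 0 < x -> M < f x -> f' x <= 0) ->
  (forall x, 0 < x -> f x < 0 -> 0 <= f' x) ->
  forall t, 0 <= t -> 0 <= f t <= M.
Proof.
  intros Hc Hd H0 Hup Hlo t Ht. split.
  - assert (- f t <= 0).
    { apply (inv_lemma (fun x => - f x) (fun x => - f' x) (t + 1) 0).
      + intros x. apply continuity_pt_opp. apply Hc.
      + intros x Hx. apply (is_derive_opp f x (f' x)). apply Hd. lra.
      + lra.
      + intros x Hx Hfx. specialize (Hlo x ltac:(lra) ltac:(lra)). lra.
      + lra. }
    lra.
  - apply (inv_lemma f f' (t + 1) M Hc).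
    + intros x Hx. apply Hd. lra.
    + lra.
    + intros x Hx Hfx. apply Hup; lra.
    + lra.
Qed.

Lemma U_0 j : (j < 4)%nat -> U j 0 = av j.
Proof.
  intros Hj. rewrite (U_int j 0 Hj ltac:(lra)). rewrite RInt_point. change zero with 0. ring.
Qed.

Lemma Mv_facts : 1 <= Mv 0 /\ 1 <= Mv 1 /\ Mv 1 <= Mv 2 /\ iM <= Mv 3.
Proof. simpl. repeat split; unfold Rmax; repeat destruct Rle_dec; lra. Qed.

Lemma U_box j t : (j < 4)%nat -> 0 <= t -> 0 <= U j t <= Mv j.
Proof.
  intros Hj Ht.
  pose proof Mv_facts as (M0 & M1 & M2 & M3).
  assert (Hc : forall k, 0 <= cv (fun k0 => U k0 t) k <= Mv k) by (intros k; apply clip_bnd, Mv_ge).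
  apply (box_lemma (U j) (fun x => Fv j x (fun k => U k x))).
  - intros x. apply continuity_pt_filterlim. apply U_cont; exact Hj.
  - intros x Hx. apply U_der; assumption.
  - rewrite U_0 by exact Hj. pose proof (Mv_ge j) as [A B].
    split; [|exact B]. destruct j as [|[|[|j]]]; simpl; lra.
  - intros x Hx HU.
    assert (Hc' : forall k, 0 <= cv (fun k0 => U k0 x) k <= Mv k) by (intros k; apply clip_bnd, Mv_ge).
    assert (Hcj : cv (fun k0 => U k0 x) j = Mv j) by (apply clip_hi; [apply Mv_ge|lra]).
    pose proof (Hc' 0%nat). pose proof (Hc' 1%nat). pose proof (Hc' 2%nat). pose proof (Hc' 3%nat).
    pose proof (ie_bnd x).
    unfold Fv. destruct j as [|[|[|[|j]]]]; cbv beta iota delta [Gv]; rewrite ?Hcj.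
    + set (c1 := cv (fun k0 => U k0 x) 1%nat) in *. set (c2 := cv (fun k0 => U k0 x) 2%nat) in *.
      assert (0 <= al1 * c1) by nra. assert (0 <= de1 * c2) by nra. nra.
    + set (c0 := cv (fun k0 => U k0 x) 0%nat) in *. set (c3 := cv (fun k0 => U k0 x) 3%nat) in *.
      assert (0 <= al2 * c0) by nra. assert (0 <= de2 * c3) by nra.
      assert (Mv 1 * (1 - Mv 1 - al2 * c0 - de2 * c3) <= 0) by nra. nra.
    + set (c1 := cv (fun k0 => U k0 x) 1%nat) in *. nra.
    + set (c1 := cv (fun k0 => U k0 x) 1%nat) in *. 
      assert (0 <= de4 * Mv 3 * c1) by (apply Rmult_le_pos; [apply Rmult_le_pos|]; lra). nra.
    + lia.
  - intros x Hx HU.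
    assert (Hc' : forall k, 0 <= cv (fun k0 => U k0 x) k <= Mv k) by (intros k; apply clip_bnd, Mv_ge).
    assert (Hcj : cv (fun k0 => U k0 x) j = 0) by (apply clip_lo; [apply Mv_ge|lra]).
    pose proof (Hc' 0%nat). pose proof (Hc' 1%nat). pose proof (Hc' 2%nat). pose proof (Hc' 3%nat).
    pose proof (ie_bnd x).
    unfold Fv. destruct j as [|[|[|[|j]]]]; cbv beta iota delta [Gv]; rewrite ?Hcj.
    + lra.
    + lra.
    + nra.
    + nra.
    + lia.
  - exact Ht.
Qed.

Lemma existence :
  exists u1 u2 u3 u4 : R -> R,
     is_solution al1 al2 be2 be3 be4 de1 de2 de4 i a1 a2 a3 a4 u1 u2 u3 u4 /\
     forall t, 0 <= t -> 0 <= u1 t /\ 0 <= u2 t /\ 0 <= u3 t /\ 0 <= u4 t.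
Proof.
  exists (U 0), (U 1), (U 2), (U 3).
  assert (Hv : forall t, 0 <= t -> forall k, (k < 4)%nat -> cv (fun k0 => U k0 t) k = U k t).
  { intros t Ht k Hk. unfold cv. apply clip_id. apply U_box; assumption. }
  split; [unfold is_solution; split; [|split; [|split; [|split; [|split; [|split; [|split; [|split]]]]]]]|].
  - apply (U_0 0); lia. - apply (U_0 1); lia. - apply (U_0 2); lia. - apply (U_0 3); lia.
  - apply cont_within. apply U_cont. lia.
  - apply cont_within. apply U_cont. lia.
  - apply cont_within. apply U_cont. lia.
  - apply cont_within. apply U_cont. lia.
  - intros t Ht.
    assert (Ei : ie t = i t) by (unfold ie; rewrite Rmax_right; lra).
    pose proof (Hv t ltac:(lra) 0%nat ltac:(lia)) as V0.
    pose proof (Hv t ltac:(lra) 1%nat ltac:(lia)) as V1.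
    pose proof (Hv t ltac:(lra) 2%nat ltac:(lia)) as V2.
    pose proof (Hv t ltac:(lra) 3%nat ltac:(lia)) as V3.
    pose proof (U_der 0 t ltac:(lia) Ht) as D0.
    pose proof (U_der 1 t ltac:(lia) Ht) as D1.
    pose proof (U_der 2 t ltac:(lia) Ht) as D2.
    pose proof (U_der 3 t ltac:(lia) Ht) as D3.
    unfold Fv in D0, D1, D2, D3. simpl in D0, D1, D2, D3.
    rewrite V0, V1, V2, V3 in *. rewrite Ei in D3.
    exact (conj D0 (conj D1 (conj D2 D3))).
  - intros t Ht.
    refine (conj _ (conj _ (conj _ _))); apply U_box; (lia || lra).
Qed.

Lemma is_derive_eq (f : R -> R) x l l' : is_derive f x l -> l = l' -> is_derive f x l'.
Proof. intros H E; subst; exact H. Qed.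

Lemma deriv_sq (f g : R -> R) x a b : is_derive f x a -> is_derive g x b ->
  is_derive (fun y => (f y - g y) ^ 2) x (2 * (f x - g x) * (a - b)).
Proof.
  intros Hf Hg.
  assert (Hd : is_derive (fun y => f y - g y) x (a - b)) by exact (is_derive_minus f g x a b Hf Hg).
  apply (is_derive_eq _ _ _ _ (is_derive_pow _ 2 x _ Hd)). simpl. ring.
Qed.

Lemma bound_cont (f : R -> R) T : 0 <= T -> (forall x, continuity_pt f x) ->
  exists K, 0 <= K /\ forall x, 0 <= x <= T -> Rabs (f x) <= K.
Proof.
  intros HT Hc.
  destruct (continuity_ab_maj f 0 T HT (fun c _ => Hc c)) as [xM [HM _]].
  destruct (continuity_ab_min f 0 T HT (fun c _ => Hc c)) as [xm [Hm _]].
  exists (Rabs (f xM) + Rabs (f xm)). split.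
  - pose proof (Rabs_pos (f xM)). pose proof (Rabs_pos (f xm)). lra.
  - intros x Hx. specialize (HM x Hx). specialize (Hm x Hx).
    apply Rabs_le. pose proof (Rabs_pos (f xM)). pose proof (Rabs_pos (f xm)).
    pose proof (Rle_abs (f xM)). pose proof (Rabs_maj2 (f xm)). lra.
Qed.

Lemma cpt_plus (f g : R -> R) x : continuity_pt f x -> continuity_pt g x -> continuity_pt (fun y => f y + g y) x.
Proof. intros; exact (continuity_pt_plus f g x H H0). Qed.
Lemma cpt_mult (f g : R -> R) x : continuity_pt f x -> continuity_pt g x -> continuity_pt (fun y => f y * g y) x.
Proof. intros; exact (continuity_pt_mult f g x H H0). Qed.
Lemma cpt_sqd (f g : R -> R) x : continuity_pt f x -> continuity_pt g x -> continuity_pt (fun y => (f y - g y) ^ 2) x.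
Proof.
  intros Hf Hg. apply (continuity_pt_ext (fun y => (f y - g y) * (f y - g y))). intros; ring.
  assert (H : continuity_pt (fun y => f y - g y) x) by exact (continuity_pt_minus f g x Hf Hg).
  apply cpt_mult; exact H.
Qed.

Definition vec4 (f1 f2 f3 f4 : R -> R) (x : R) : nat -> R :=
  fun k => match k with 0 => f1 x | 1 => f2 x | 2 => f3 x | _ => f4 x end.

Lemma sq_sum_le a b c d : (Rabs a + Rabs b + Rabs c + Rabs d) ^ 2 <= 4 * (a ^ 2 + b ^ 2 + c ^ 2 + d ^ 2).
Proof.
  rewrite <- (pow2_abs a), <- (pow2_abs b), <- (pow2_abs c), <- (pow2_abs d).
  set (x := Rabs a). set (y := Rabs b). set (z := Rabs c). set (w := Rabs d).
  pose proof (pow2_ge_0 (x - y)). pose proof (pow2_ge_0 (x - z)). pose proof (pow2_ge_0 (x - w)).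
  pose proof (pow2_ge_0 (y - z)). pose proof (pow2_ge_0 (y - w)). pose proof (pow2_ge_0 (z - w)).
  nra.
Qed.

Lemma uniqueness (j : R -> R) (a1' a2' a3' a4' : R) (u1 u2 u3 u4 v1 v2 v3 v4 : R -> R) :
  is_solution al1 al2 be2 be3 be4 de1 de2 de4 j a1' a2' a3' a4' u1 u2 u3 u4 ->
  is_solution al1 al2 be2 be3 be4 de1 de2 de4 j a1' a2' a3' a4' v1 v2 v3 v4 ->
  forall t, 0 <= t -> u1 t = v1 t /\ u2 t = v2 t /\ u3 t = v3 t /\ u4 t = v4 t.
Proof.
  intros (Su1 & Su2 & Su3 & Su4 & Cu1 & Cu2 & Cu3 & Cu4 & Du)
         (Sv1 & Sv2 & Sv3 & Sv4 & Cv1 & Cv2 & Cv3 & Cv4 & Dv) t0 Ht0.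
  set (T := t0 + 1).
  set (e1 := fun t => u1 (Rmax 0 t)). set (e2 := fun t => u2 (Rmax 0 t)).
  set (e3 := fun t => u3 (Rmax 0 t)). set (e4 := fun t => u4 (Rmax 0 t)).
  set (f1 := fun t => v1 (Rmax 0 t)). set (f2 := fun t => v2 (Rmax 0 t)).
  set (f3 := fun t => v3 (Rmax 0 t)). set (f4 := fun t => v4 (Rmax 0 t)).
  assert (CP : forall g : R -> R, cont_on_Rplus g -> forall x, continuity_pt (fun t => g (Rmax 0 t)) x).
  { intros g Hg x. apply continuity_pt_filterlim. apply (ext_cont g Hg). }
  pose proof (CP _ Cu1) as Ce1. pose proof (CP _ Cu2) as Ce2. pose proof (CP _ Cu3) as Ce3. pose proof (CP _ Cu4) as Ce4.
  pose proof (CP _ Cv1) as Cf1. pose proof (CP _ Cv2) as Cf2. pose proof (CP _ Cv3) as Cf3. pose proof (CP _ Cv4) as Cf4.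
  fold e1 e2 e3 e4 f1 f2 f3 f4 in Ce1, Ce2, Ce3, Ce4, Cf1, Cf2, Cf3, Cf4.
  assert (HT : 0 <= T) by (unfold T; lra).
  destruct (bound_cont e1 T HT Ce1) as [K1 [HK1 B1]]. destruct (bound_cont e2 T HT Ce2) as [K2 [HK2 B2]].
  destruct (bound_cont e3 T HT Ce3) as [K3 [HK3 B3]]. destruct (bound_cont e4 T HT Ce4) as [K4 [HK4 B4]].
  destruct (bound_cont f1 T HT Cf1) as [K5 [HK5 B5]]. destruct (bound_cont f2 T HT Cf2) as [K6 [HK6 B6]].
  destruct (bound_cont f3 T HT Cf3) as [K7 [HK7 B7]]. destruct (bound_cont f4 T HT Cf4) as [K8 [HK8 B8]].
  set (K := K1 + K2 + K3 + K4 + K5 + K6 + K7 + K8).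
  assert (HK : 0 <= K) by (unfold K; lra).
  set (L := LK K). assert (HL : 0 < L) by (apply LK_pos; exact HK).
  set (c := 8 * L).
  set (E := fun t => (e1 t - f1 t) ^ 2 + (e2 t - f2 t) ^ 2 + (e3 t - f3 t) ^ 2 + (e4 t - f4 t) ^ 2).
  set (ue := vec4 e1 e2 e3 e4). set (ve := vec4 f1 f2 f3 f4).
  set (dE := fun x => 2 * (e1 x - f1 x) * (Gv 0 (j x) (ue x) - Gv 0 (j x) (ve x))
                    + 2 * (e2 x - f2 x) * (Gv 1 (j x) (ue x) - Gv 1 (j x) (ve x))
                    + 2 * (e3 x - f3 x) * (Gv 2 (j x) (ue x) - Gv 2 (j x) (ve x))
                    + 2 * (e4 x - f4 x) * (Gv 3 (j x) (ue x) - Gv 3 (j x) (ve x))).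
  assert (LOC : forall (g : R -> R) x l, 0 < x -> is_derive g x l -> is_derive (fun t => g (Rmax 0 t)) x l).
  { intros g x l Hx Hg. apply (is_derive_ext_loc g); [|exact Hg].
    exists (mkposreal x Hx). intros y Hy. change (Rabs (y - x) < x) in Hy. apply Rabs_def2 in Hy.
    rewrite Rmax_right by lra. reflexivity. }
  assert (DE : forall x, 0 < x -> is_derive E x (dE x)).
  { intros x Hx.
    destruct (Du x Hx) as (Du1 & Du2 & Du3 & Du4).
    destruct (Dv x Hx) as (Dv1 & Dv2 & Dv3 & Dv4).
    apply (LOC _ _ _ Hx) in Du1. apply (LOC _ _ _ Hx) in Du2. apply (LOC _ _ _ Hx) in Du3. apply (LOC _ _ _ Hx) in Du4.
    apply (LOC _ _ _ Hx) in Dv1. apply (LOC _ _ _ Hx) in Dv2. apply (LOC _ _ _ Hx) in Dv3. apply (LOC _ _ _ Hx) in Dv4.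
    fold e1 e2 e3 e4 f1 f2 f3 f4 in Du1, Du2, Du3, Du4, Dv1, Dv2, Dv3, Dv4.
    assert (R0 : Rmax 0 x = x) by (apply Rmax_right; lra).
    unfold dE, ue, ve, vec4, Gv. unfold e1, e2, e3, e4, f1, f2, f3, f4 in *. rewrite !R0 in *.
    pose proof (deriv_sq _ _ _ _ _ Du1 Dv1) as Q1. pose proof (deriv_sq _ _ _ _ _ Du2 Dv2) as Q2.
    pose proof (deriv_sq _ _ _ _ _ Du3 Dv3) as Q3. pose proof (deriv_sq _ _ _ _ _ Du4 Dv4) as Q4.
    try rewrite !R0 in Q1, Q2, Q3, Q4.
    pose proof (is_derive_plus _ _ _ _ _ (is_derive_plus _ _ _ _ _ (is_derive_plus _ _ _ _ _ Q1 Q2) Q3) Q4) as Q.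
    cbv beta in Q. rewrite !R0 in Q. exact Q. }
  assert (BND : forall x, 0 < x <= T -> dE x <= c * E x).
  { intros x Hx.
    assert (Hb : forall k, (k < 4)%nat -> Rabs (ue x k) <= K /\ Rabs (ve x k) <= K).
    { intros k Hk. unfold ue, ve, vec4.
      specialize (B1 x ltac:(lra)). specialize (B2 x ltac:(lra)). specialize (B3 x ltac:(lra)). specialize (B4 x ltac:(lra)).
      specialize (B5 x ltac:(lra)). specialize (B6 x ltac:(lra)). specialize (B7 x ltac:(lra)). specialize (B8 x ltac:(lra)).
      destruct k as [|[|[|[|k]]]]; try lia; unfold K; split; lra. }
    pose proof (G_lip K 0 (j x) (ue x) (ve x) HK Hb) as G0.
    pose proof (G_lip K 1 (j x) (ue x) (ve x) HK Hb) as G1.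
    pose proof (G_lip K 2 (j x) (ue x) (ve x) HK Hb) as G2.
    pose proof (G_lip K 3 (j x) (ue x) (ve x) HK Hb) as G3.
    fold L in G0, G1, G2, G3.
    assert (SD : Sdist (ue x) (ve x) = Rabs (e1 x - f1 x) + Rabs (e2 x - f2 x) + Rabs (e3 x - f3 x) + Rabs (e4 x - f4 x)) by reflexivity.
    rewrite SD in G0, G1, G2, G3.
    set (S := Rabs (e1 x - f1 x) + Rabs (e2 x - f2 x) + Rabs (e3 x - f3 x) + Rabs (e4 x - f4 x)) in *.
    assert (PR : forall d g, Rabs g <= L * S -> 2 * d * g <= 2 * (Rabs d * (L * S))).
    { intros d g Hg. pose proof (Rle_abs (d * g)). rewrite Rabs_mult in H.
      pose proof (Rabs_pos d). assert (Rabs d * Rabs g <= Rabs d * (L * S)) by (apply Rmult_le_compat_l; lra). lra. }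
    pose proof (PR _ _ G0 : 2 * (e1 x - f1 x) * _ <= _) as P0.
    pose proof (PR _ _ G1 : 2 * (e2 x - f2 x) * _ <= _) as P1.
    pose proof (PR _ _ G2 : 2 * (e3 x - f3 x) * _ <= _) as P2.
    pose proof (PR _ _ G3 : 2 * (e4 x - f4 x) * _ <= _) as P3.
    pose proof (sq_sum_le (e1 x - f1 x) (e2 x - f2 x) (e3 x - f3 x) (e4 x - f4 x)) as SQ. fold S in SQ.
    assert (DS : dE x <= 2 * L * S ^ 2).
    { unfold dE. replace (2 * L * S ^ 2) with (2 * (Rabs (e1 x - f1 x) * (L * S)) + 2 * (Rabs (e2 x - f2 x) * (L * S))
         + 2 * (Rabs (e3 x - f3 x) * (L * S)) + 2 * (Rabs (e4 x - f4 x) * (L * S))) by (unfold S; ring).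
      lra. }
    unfold c. change (E x) with ((e1 x - f1 x) ^ 2 + (e2 x - f2 x) ^ 2 + (e3 x - f3 x) ^ 2 + (e4 x - f4 x) ^ 2).
    nra. }
  set (H := fun x => exp (- c * x) * E x).
  assert (CE : forall x, continuity_pt E x).
  { intros x. unfold E. repeat apply cpt_plus; apply cpt_sqd; auto. }
  assert (CH : forall x, continuity_pt H x).
  { intros x. unfold H. apply (cpt_mult (fun y => exp (- c * y)) E x); [|apply CE].
    apply continuity_pt_filterlim. apply (ex_derive_continuous (V := R_NormedModule) (fun y => exp (- c * y))). auto_derive. auto. }
  assert (DH : forall x, 0 < x -> is_derive H x (exp (- c * x) * (dE x - c * E x))).
  { intros x Hx.
    assert (D1 : is_derive (fun y => exp (- c * y)) x (- c * exp (- c * x))).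
    { auto_derive. auto. ring. }
    pose proof (is_derive_mult (K := R_AbsRing) _ _ x _ _ D1 (DE x Hx) Rmult_comm) as D.
    apply (is_derive_eq _ _ _ _ D). change (- c * exp (- c * x) * E x + exp (- c * x) * dE x = exp (- c * x) * (dE x - c * E x)).
    ring. }
  assert (H0 : H 0 = 0).
  { unfold H, E, e1, e2, e3, e4, f1, f2, f3, f4. rewrite Rmax_left by lra.
    rewrite Su1, Su2, Su3, Su4, Sv1, Sv2, Sv3, Sv4. ring. }
  assert (Hneg : H t0 <= 0).
  { apply (inv_lemma H (fun x => exp (- c * x) * (dE x - c * E x)) T 0 CH).
    - intros x Hx. apply DH. lra.
    - lra.
    - intros x Hx _. pose proof (exp_pos (- c * x)). pose proof (BND x ltac:(lra)). nra.
    - unfold T; lra. }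
  unfold H, E, e1, e2, e3, e4, f1, f2, f3, f4 in Hneg. rewrite Rmax_right in Hneg by lra.
  pose proof (exp_pos (- c * t0)) as Hexp.
  pose proof (pow2_ge_0 (u1 t0 - v1 t0)). pose proof (pow2_ge_0 (u2 t0 - v2 t0)).
  pose proof (pow2_ge_0 (u3 t0 - v3 t0)). pose proof (pow2_ge_0 (u4 t0 - v4 t0)).
  set (q := (u1 t0 - v1 t0) ^ 2 + (u2 t0 - v2 t0) ^ 2 + (u3 t0 - v3 t0) ^ 2 + (u4 t0 - v4 t0) ^ 2) in Hneg.
  assert (q <= 0).
  { apply Rmult_le_reg_l with (exp (- c * t0)). exact Hexp. rewrite Rmult_0_r. exact Hneg. }
  assert (Z1 : (u1 t0 - v1 t0) ^ 2 = 0) by (unfold q in *; lra).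
  assert (Z2 : (u2 t0 - v2 t0) ^ 2 = 0) by (unfold q in *; lra).
  assert (Z3 : (u3 t0 - v3 t0) ^ 2 = 0) by (unfold q in *; lra).
  assert (Z4 : (u4 t0 - v4 t0) ^ 2 = 0) by (unfold q in *; lra).
  assert (W1 : u1 t0 - v1 t0 = 0) by nra. assert (W2 : u2 t0 - v2 t0 = 0) by nra.
  assert (W3 : u3 t0 - v3 t0 = 0) by nra. assert (W4 : u4 t0 - v4 t0 = 0) by nra.
  refine (conj _ (conj _ (conj _ _))); lra.
Qed.
End Model.

Theorem theorem2p1 (al1 al2 be2 be3 be4 de1 de2 de4 iM : R) (i : R -> R)
  (a1 a2 a3 a4 : R) :
  0 < al1 -> 0 < al2 -> 0 < be2 -> 0 < be3 -> 0 < be4 ->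
  0 < de1 -> 0 < de2 -> 0 < de4 -> 0 < iM ->
  admissible_infusion iM i ->
  0 <= a1 -> 0 <= a2 -> 0 <= a3 -> 0 <= a4 ->
  (exists u1 u2 u3 u4 : R -> R,
     is_solution al1 al2 be2 be3 be4 de1 de2 de4 i a1 a2 a3 a4 u1 u2 u3 u4 /\
     forall t, 0 <= t -> 0 <= u1 t /\ 0 <= u2 t /\ 0 <= u3 t /\ 0 <= u4 t) /\
  (forall u1 u2 u3 u4 v1 v2 v3 v4 : R -> R,
     is_solution al1 al2 be2 be3 be4 de1 de2 de4 i a1 a2 a3 a4 u1 u2 u3 u4 ->
     is_solution al1 al2 be2 be3 be4 de1 de2 de4 i a1 a2 a3 a4 v1 v2 v3 v4 ->
     forall t, 0 <= t -> u1 t = v1 t /\ u2 t = v2 t /\ u3 t = v3 t /\ u4 t = v4 t).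
Proof.
  intros H1 H2 H3 H4 H5 H6 H7 H8 H9 H10 H11 H12 H13 H14. split.
  - exact (existence al1 al2 be2 be3 be4 de1 de2 de4 H1 H2 H3 H4 H5 H6 H7 H8 iM i a1 a2 a3 a4 H9 H10 H11 H12 H13 H14).
  - intros u1 u2 u3 u4 v1 v2 v3 v4 Hu Hv t Ht.
    exact (uniqueness al1 al2 be2 be3 be4 de1 de2 de4 H1 H2 H3 H4 H5 H6 H7 H8 i a1 a2 a3 a4 u1 u2 u3 u4 v1 v2 v3 v4 Hu Hv t Ht).
Qed.
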